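(* Suppose each interface function $g_k$ is piecewise linear and $\varepsilon$ is piecewise constant (constant on each $\Omega_k$). Then there is a constant $C_8>0$ independent of $h$ such that $$\sum_{j=1}^{S}\operatorname{meas}\big(\operatorname{supp}_{S_j}|\varepsilon-\varepsilon_h|\big)\le C_8 h\qquad\text{for all } h>0.$$
   Context: $H,L_x>0$, $\Omega=(0,L_x)\times(-H,H)$. There are $I\ge1$ interfaces given by $g_k:[0,L_x]\to\mathbb R$ ($k=1,\dots,I$), piecewise of the form $\sum_l\mathbf 1_{[x_{lk},x_{(l+1)k})}\phi_{lk}$ with nonzero jumps at the finitely many break points; the interfaces are separated from each other and from $x_2=\pm H$ by some $\delta>0$, and $\Omega_k$ ($k=1,\dots,I+1$) is the region of $\Omega$ between the graphs of $g_{k-1}$ and $g_k$ ($g_0\equiv -H$, $g_{I+1}\equiv H$). $\varepsilon:\Omega\to\mathbb C$ is the relative permittivity. Slices: $-H=h_0<h_1<\dots<h_S=H$, $S_j=\{(x_1,x_2)\in\Omega:h_{j-1}\le x_2<h_j\}$, $\Delta h_j=h_j-h_{j-1}$, $h=\max_j\Delta h_j$, with $h/\min_j\Delta h_j\le C_\Delta$ for a fixed constant $C_\Delta>0$, and every point where $g_k'=0$ lies on an inter-slice line $x_2=h_j$. The stairstep approximation is $\varepsilon_h(x_1,x_2)=\varepsilon(x_1,h_{j-1/2})$ on $S_j$, $h_{j-1/2}=(h_{j-1}+h_j)/2$ (in slices where the interfaces are already horizontal/vertical stairsteps, $\varepsilon_h=\varepsilon$). $\operatorname{supp}_{S_j}|\varepsilon-\varepsilon_h|$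 is the set of points of $S_j$ where $\varepsilon\ne\varepsilon_h$, and meas is Lebesgue measure. *)

(* Defs.v *)
From HB Require Import structures.
From mathcomp Require Import all_boot all_order all_algebra.
From mathcomp Require Import all_classical all_reals all_analysis.
From mathcomp Require Import complex.
Set Implicit Arguments. Unset Strict Implicit. Unset Printing Implicit Defensive.
Import Order.TTheory GRing.Theory Num.Theory.
Local Open Scope classical_set_scope.
Local Open Scope ring_scope.

Definition lebesgue2 {R : realType} : set (R * R) -> \bar R :=
  ((@lebesgue_measure R) \x (@lebesgue_measure R))%E.

Definition Omega {R : realType} (Lx H : R) : set (R * R) :=
  [set p | 0 < p.1 < Lx /\ - H < p.2 < H].

Definition pw_linear_with_jumps {R : realType} (Lx : R) (f : R -> R) : Prop :=
  exists (n : nat) (xb a b : nat -> R),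
    (0 < n)%N /\ xb 0%N = 0 /\ xb n = Lx /\
    (forall l, (l < n)%N -> xb l < xb l.+1) /\
    (forall l, (l < n)%N -> forall x, xb l <= x < xb l.+1 -> f x = a l * x + b l) /\
    (forall l, (0 < l < n)%N -> a l.-1 * xb l + b l.-1 != a l * xb l + b l).

Definition gext {R : realType} (H : R) (I : nat) (g : nat -> R -> R) (k : nat) (x : R) : R :=
  if k == 0%N then - H else if k == I.+1 then H else g k x.

Definition Omega_k {R : realType} (Lx H : R) (I : nat) (g : nat -> R -> R) (k : nat)
  : set (R * R) :=
  [set p | Omega Lx H p /\ gext H I g k.-1 p.1 < p.2 < gext H I g k p.1].

Definition slice {R : realType} (Lx H : R) (hs : nat -> R) (j : nat) : set (R * R) :=
  [set p | Omega Lx H p /\ hs j.-1 <= p.2 < hs j].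

Definition hmid {R : realType} (hs : nat -> R) (j : nat) : R := (hs j.-1 + hs j) / 2.

Definition eps_h {R : realType} {V : Type} (hs : nat -> R) (eps : R * R -> V) (j : nat)
  (p : R * R) : V := eps (p.1, hmid hs j).

Definition supp_slice {R : realType} {V : Type} (Lx H : R) (hs : nat -> R)
  (eps : R * R -> V) (j : nat) : set (R * R) :=
  [set p | slice Lx H hs j p /\ eps p <> eps_h hs eps j p].

Definition dh {R : realType} (hs : nat -> R) (j : nat) : R := hs j - hs j.-1.
Definition hmax {R : realType} (S : nat) (hs : nat -> R) : R :=
  \big[Num.max/0]_(1 <= j < S.+1) dh hs j.

Definition admissible_slicing {R : realType} (Lx H : R) (I : nat) (g : nat -> R -> R)
  (CD : R) (S : nat) (hs : nat -> R) : Prop :=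
  (0 < S)%N /\ hs 0%N = - H /\ hs S = H /\
  (forall j, (j < S)%N -> hs j < hs j.+1) /\
  (forall j, (1 <= j <= S)%N -> hmax S hs <= CD * dh hs j) /\
  (forall k, (1 <= k <= I)%N -> forall x, 0 < x < Lx ->
     derivable (g k) x 1 -> derive1 (g k) x = 0 ->
     exists j, (j <= S)%N /\ g k x = hs j).

(* Main.v *)
Require Import Defs.
From HB Require Import structures.
From mathcomp Require Import all_boot all_order all_algebra.
From mathcomp Require Import all_classical all_reals all_analysis.
From mathcomp Require Import complex.
From mathcomp Require Import zify ring.
Import Order.TTheory GRing.Theory Num.Theory.
Local Open Scope classical_set_scope.
Local Open Scope ring_scope.

Section Helpers.
Context {R : realType}.
Local Notation lam := (@lebesgue_measure R).

Lemma L2mono (A B : set (R * R)) : A `<=` B -> (lebesgue2 A <= lebesgue2 B)%E.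
Proof.
move=> AB; rewrite /lebesgue2 /product_measure1.
rewrite !ge0_integralE //.
apply: ereal_sup_le => _ [h hf <-]; exists h => //= x.
apply: le_trans (hf x) _.
rewrite /patch /=; case: ifP => // _ /=.
rewrite /lebesgue_measure /lebesgue_stieltjes_measure /measure_extension.
apply: le_mu_ext => y /=; rewrite /xsection /= !inE; exact: AB.
Qed.

Lemma sub2 (A B : set R) : measurable A -> measurable B ->
  (lam (A `|` B) <= lam A + lam B)%E.
Proof.
move=> mA mB.
have -> : A `|` B = A `|` (B `\` A).
  rewrite predeqE => x; rewrite /setU /setD /=.
  case: (pselect (A x)); tauto.
rewrite measureU //; last 2 first.
  exact: measurableD.
  by rewrite predeqE => x; split => //= -[? []].
rewrite leeD2l //; apply: le_measure; rewrite ?inE //.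
exact: measurableD.
Qed.

Lemma subN (F : nat -> set R) m : (forall k, (k < m)%N -> measurable (F k)) ->
  (lam (\big[setU/set0]_(k < m) F k) <= \sum_(k < m) lam (F k))%E.
Proof.
elim: m => [|m IH] mF; first by rewrite !big_ord0 measure0.
rewrite !big_ord_recr /=.
have mU : measurable (\big[setU/set0]_(k < m) F k).
  by apply: bigsetU_measurable => i _; apply: mF; exact: (ltn_trans (ltn_ord i) (ltnSn m)).
apply: (@le_trans _ _ (lam (\big[setU/set0]_(k < m) F k) + lam (F m))%E).
  exact: (sub2 _ _ mU (mF m (ltnSn m))).
rewrite leeD2r // IH // => k km; apply: mF; exact: ltnW.
Qed.

Lemma in_bigU (F : nat -> set R) n x :
  (\big[setU/set0]_(1 <= j < n.+1) F j) x -> exists j, (1 <= j <= n)%N /\ F j x.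
Proof.
elim: n => [|n IH]; first by rewrite big_geq.
rewrite big_nat_recr //= => -[/IH [j [/andP[j1 jn] Fj]]|Fn].
  by exists j; rewrite j1 /= (leq_trans jn).
by exists n.+1; rewrite leqnn.
Qed.

Lemma disjsum (F : nat -> set R) n :
  (forall j, measurable (F j)) ->
  (forall i j, (1 <= i)%N -> (i < j)%N -> (j <= n)%N -> F i `&` F j = set0) ->
  (\sum_(1 <= j < n.+1) lam (F j) = lam (\big[setU/set0]_(1 <= j < n.+1) F j))%E.
Proof.
move=> mF; elim: n => [|n IH] dis; first by rewrite !big_geq // measure0.
rewrite big_nat_recr //= [in RHS]big_nat_recr //= measureU //.
- rewrite IH // => i j i1 ij jn; apply: dis => //; exact: leqW.
- by apply: bigsetU_measurable => i _; exact: mF.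
- exact: mF.
- rewrite -subset0 => x [/in_bigU [j [/andP [j1 jn] Fj]] Fn].
  have := dis j n.+1 j1 jn (leqnn _).
  by rewrite predeqE => /(_ x) [+ _]; apply.
Qed.

End Helpers.
Section Helpers2.
Context {R : realType}.

Lemma pw_meas (Lx : R) (f : R -> R) : pw_linear_with_jumps Lx f ->
  measurable_fun `]0, Lx[ f.
Proof.
move=> [n [xb [a [b [n0 [x0 [xn [inc [aff _]]]]]]]]].
pose E l : set R := if (l < n)%N then `[xb l, xb l.+1[%classic else set0.
have mE l : measurable (E l) by rewrite /E; case: ifP => _ //; exact: measurable_itv.
have cov : `]0, Lx[ `<=` \bigcup_l E l.
  move=> x /=; rewrite in_itv /= => /andP [x0' xL].
  suff: forall m, (m <= n)%N -> x < xb m -> exists2 l, (l < m)%N & xb l <= x < xb l.+1.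
    move=> /(_ n (leqnn n)); rewrite xn => /(_ xL) [l ln hl].
    by exists l => //; rewrite /E ln /= in_itv /=.
  elim => [|m IH] mn xm; first by rewrite x0 ltNge (ltW x0') in xm.
  case: (ltP x (xb m)) => [xm'|xm'].
    by have [l lm hl] := IH (ltnW mn) xm'; exists l => //; exact: ltnW.
  by exists m => //; rewrite xm' xm.
apply: (measurable_funS _ cov) => //.
  by apply: bigcup_measurable => l _.
apply/measurable_fun_bigcup => // l.
rewrite /E; case: ifP => ln; last exact: measurable_fun_set0.
apply: (eq_measurable_fun (fun x => a l * x + b l)).
  by move=> x; rewrite inE /= in_itv /= => hx; rewrite (aff l ln x hx).
apply: measurable_realfun.measurable_funD; last exact: measurable_cst.
apply: measurable_realfun.measurable_funM; first exact: measurable_cst.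
exact: measurable_id.
Qed.

End Helpers2.

Lemma lee_sum_nat' (R : realType) (f g : nat -> \bar R) m n :
  (forall i, (m <= i < n)%N -> (f i <= g i)%E) ->
  (\sum_(m <= i < n) f i <= \sum_(m <= i < n) g i)%E.
Proof.
move=> h; rewrite big_nat_cond [leRHS]big_nat_cond; apply: lee_sum => i /andP[hi _].
exact: h.
Qed.

Theorem lemma4 (R : realType) (H Lx : R) (I : nat) (g : nat -> R -> R)
  (delta : R) (eps : R * R -> R[i]) (CD : R) :
  0 < H -> 0 < Lx -> (1 <= I)%N -> 0 < delta -> 0 < CD ->
  (* interfaces: piecewise linear, separated from each other and from x2 = +-H by delta *)
  (forall k, (1 <= k <= I)%N -> pw_linear_with_jumps Lx (g k)) ->
  (forall k, (k <= I)%N -> forall x, 0 <= x <= Lx ->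
     gext H I g k x + delta <= gext H I g k.+1 x) ->
  (* eps piecewise constant: constant on each Omega_k *)
  (exists c : nat -> R[i], forall k, (1 <= k <= I.+1)%N ->
     forall p, Omega_k Lx H I g k p -> eps p = c k) ->
  exists C8 : R, 0 < C8 /\
    forall (S : nat) (hs : nat -> R), admissible_slicing Lx H I g CD S hs ->
      (\sum_(1 <= j < S.+1) lebesgue2 (supp_slice Lx H hs eps j) <= (C8 * hmax S hs)%:E)%E.
Proof.
move=> H0 L0 I1 d0 CD0 pw _ [c hc].
exists (2 * I%:R * Lx); split.
  by rewrite !mulr_gt0 // ltr0n.
move=> S hs [S0 [hs0 [hsS [hinc _]]]].
have hmono : forall i j, (i <= j)%N -> (j <= S)%N -> hs i <= hs j.
  move=> i; elim => [|j IH] ij jS; first by move: ij; rewrite leqn0 => /eqP ->.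
  move: ij; rewrite leq_eqVlt => /orP [/eqP -> //| ij].
  exact: le_trans (IH ij (ltnW jS)) (ltW (hinc j jS)).
have hstrict : forall i j, (i < j)%N -> (j <= S)%N -> hs i < hs j.
  move=> i j ij jS; apply: lt_le_trans (hinc i (leq_trans ij jS)) (hmono _ _ ij jS).
pose lam := (@lebesgue_measure R).
pose X k j := `]0, Lx[%classic `&` g k @^-1` `[hs j.-1, hs j]%classic.
pose Z k j := `]0, Lx[%classic `&` g k @^-1` `[hs j.-1, hs j[%classic.
pose W k j := `]0, Lx[%classic `&` g k @^-1` [set hs j].
pose Xj j := \big[setU/set0]_(k < I) X k.+1 j.
have mg : forall k, (1 <= k <= I)%N -> measurable_fun `]0, Lx[ (g k).
  by move=> k hk; apply: pw_meas; exact: pw.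
have mX : forall k j, (1 <= k <= I)%N -> measurable (X k j).
  by move=> k j hk; apply: (mg k hk) => //; exact: measurable_itv.
have mZ : forall k j, (1 <= k <= I)%N -> measurable (Z k j).
  by move=> k j hk; apply: (mg k hk) => //; exact: measurable_itv.
have mW : forall k j, (1 <= k <= I)%N -> measurable (W k j).
  by move=> k j hk; apply: (mg k hk) => //; exact: measurable_set1.
have mXj : forall j, measurable (Xj j).
  move=> j; apply: bigsetU_measurable => k _; apply: mX.
  by rewrite ltn_ord.
have step0 : forall j, (1 <= j <= S)%N ->
    supp_slice Lx H hs eps j `<=` Xj j `*` `[hs j.-1, hs j[%classic.
  move=> j /andP [j1 jS] p [[[/andP [p10 p1L] /andP [p2H1 p2H2]] /andP [pj1 pj2]] neq].
  split; last by rewrite /= in_itv /= pj1 pj2.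
  rewrite /Xj -(bigcup_mkord I (fun k => X k.+1 j)).
  case: (pselect (exists k, (k < I)%N /\ X k.+1 j p.1)) => [[k [kI Xk]]|nX].
    by exists k.
  exfalso; apply: neq.
  set x := p.1.
  have xO : `]0, Lx[%classic x by rewrite /= in_itv /= p10 p1L.
  have nin : forall k, (1 <= k <= I)%N -> ~ (hs j.-1 <= g k x <= hs j).
    move=> k /andP [k1 kI] hk; apply: nX; exists k.-1.
    by rewrite prednK //.
  have ex : exists k, (k <= I.+1)%N && (p.2 < gext H I g k x).
    by exists I.+1; rewrite leqnn /gext /= eqxx.
  case: (ex_minnP ex) => k0 /andP [k0I p2k0] min.
  have k0pos : (0 < k0)%N.
    rewrite lt0n; apply/negP => /eqP k00; move: p2k0; rewrite k00 /gext /=.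
    by rewrite ltNge (ltW p2H1).
  have lowk : gext H I g k0.-1 x <= p.2.
    rewrite leNgt; apply/negP => h.
    have := min k0.-1; rewrite h (leq_trans (leq_pred _) k0I) => /(_ isT).
    by rewrite leqNgt ltn_predL k0pos.
  have jS' : (j.-1 < S)%N by rewrite prednK.
  have hjj : hs j.-1 < hs j by have := hinc j.-1 jS'; rewrite prednK.
  have [hm1 hm2] := midf_lt hjj.
  have hsj1 : - H <= hs j.-1 by rewrite -hs0; apply: hmono => //; exact: ltnW.
  have hsj : hs j <= H by rewrite -hsS; apply: hmono.
  set m := (hs j.-1 + hs j) / 2 in hm1 hm2.
  have [lo_p lo_q] : gext H I g k0.-1 x < p.2 /\ gext H I g k0.-1 x < m.
    rewrite /gext; case: ifP => [_|h0].
      by split => //; apply: le_lt_trans hsj1 hm1.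
    have hI : (k0.-1 == I.+1) = false.
      apply/negP => /eqP e; move: k0I; rewrite -(prednK k0pos) e.
      by rewrite ltnn.
    rewrite hI.
    have k1 : (1 <= k0.-1 <= I)%N.
      rewrite lt0n h0 /= -ltnS prednK //.
    have glt : g k0.-1 x < hs j.-1.
      rewrite ltNge; apply/negP => hh; apply: (nin _ k1).
      rewrite hh /=; apply: ltW; apply: le_lt_trans pj2.
      by move: lowk; rewrite /gext h0 hI.
    split; first exact: lt_le_trans glt pj1.
    exact: lt_trans glt hm1.
  have hi_q : m < gext H I g k0 x.
    move: p2k0; rewrite /gext; case: ifP => [/eqP k00|h0]; first by rewrite k00 in k0pos.
    case: ifP => [_ _|hI p2g]; first exact: lt_le_trans hm2 hsj.
    have k1 : (1 <= k0 <= I)%N.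
      rewrite k0pos /= -ltnS ltn_neqAle k0I andbT; exact/negbT.
    have glt : hs j < g k0 x.
      rewrite ltNge; apply/negP => hh; apply: (nin _ k1).
      rewrite hh andbT; apply: ltW; exact: le_lt_trans pj1 p2g.
    exact: lt_trans hm2 glt.
  have k0r : (1 <= k0 <= I.+1)%N by rewrite k0pos k0I.
  rewrite /eps_h (hc k0 k0r p); last first.
    split; first by split; rewrite ?p10 ?p1L ?p2H1 ?p2H2.
    by rewrite /= -(prednK k0pos) /= lo_p -(prednK k0pos) in p2k0 *.
  rewrite (hc k0 k0r (p.1, hmid hs j)) //.
  split; last by rewrite /= lo_q hi_q.
  split; first by rewrite /= p10 p1L.
  rewrite /=; apply/andP; split.
    exact: le_lt_trans hsj1 hm1.
  exact: lt_le_trans hm2 hsj.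
have step1 : forall j, (1 <= j <= S)%N ->
    (lebesgue2 (supp_slice Lx H hs eps j) <= lam (Xj j) * (dh hs j)%:E)%E.
  move=> j /andP [j1 jS].
  apply: (le_trans (L2mono _ _ (step0 j _))); first by rewrite j1 jS.
  rewrite /lebesgue2 product_measure1E //; last exact: mXj.
  have jS' : (j.-1 < S)%N by rewrite prednK.
  have hjj : hs j.-1 < hs j by have := hinc j.-1 jS'; rewrite prednK.
  have eI : lam `[hs j.-1, hs j[%classic = (dh hs j)%:E.
    by rewrite /lam lebesgue_measure_itv /= lte_fin hjj /dh EFinB.
  by rewrite -eI.
have lamO : lam `]0, Lx[%classic = Lx%:E.
  by rewrite /lam lebesgue_measure_itv /= lte_fin L0 oppr0 adde0.
have mO : measurable `]0, Lx[%classic by exact: measurable_itv.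
have step3 : forall k, (1 <= k <= I)%N ->
    (\sum_(1 <= j < S.+1) lam (X k j) <= (Lx + Lx)%:E)%E.
  move=> k hk.
  have eXZW : forall j, (1 <= j <= S)%N -> lam (X k j) = (lam (Z k j) + lam (W k j))%E.
    move=> j /andP [j1 jS]; rewrite -measureU //; last 3 first.
    - exact: mZ.
    - exact: mW.
    - rewrite -subset0 => x [[_ /=]]; rewrite in_itv /= => /andP [_ h] [_ /= e].
      by rewrite e ltxx in h.
    congr (lam _); rewrite predeqE => x; rewrite /X /Z /W /= !in_itv /=.
    split => [[hx /andP [a b]]|[[hx /andP[a b]]|[hx e]]].
    - case: (ltP (g k x) (hs j)) => gb; [left|right]; split => //.
        by rewrite a.
      by apply/le_anti; rewrite b gb.
    - by split => //; rewrite a ltW.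
    - split => //; rewrite e lexx andbT; apply: hmono => //.
      exact: leq_pred.
  rewrite big_nat_cond (eq_bigr (fun j => lam (Z k j) + lam (W k j))%E); last first.
    by move=> j /andP [hj _]; exact: eXZW.
  rewrite -big_nat_cond big_split /= EFinD; apply: leeD.
  - rewrite (@disjsum _ (Z k) S); last 2 first.
    + by move=> j; exact: mZ.
    + move=> i j i1 ij jS; rewrite -subset0 => x [[_ /=]].
      rewrite !in_itv /= => /andP [_ h1] [_ /=]; rewrite in_itv /= => /andP [h2 _].
      have : hs i <= hs j.-1 by apply: hmono; [lia | exact: leq_trans (leq_pred _) jS].
      move=> h3; have := lt_le_trans h1 (le_trans h3 h2); by rewrite ltxx.
    rewrite -lamO; apply: le_measure; rewrite ?inE //.
    + by apply: bigsetU_measurable => j _; exact: mZ.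
    + by move=> x /in_bigU [j [_ [hx _]]].
  - rewrite (@disjsum _ (W k) S); last 2 first.
    + by move=> j; exact: mW.
    + move=> i j i1 ij jS; rewrite -subset0 => x [[_ /= e1] [_ /= e2]].
      have := hstrict i j ij jS; by rewrite -e1 -e2 ltxx.
    rewrite -lamO; apply: le_measure; rewrite ?inE //.
    + by apply: bigsetU_measurable => j _; exact: mW.
    + by move=> x /in_bigU [j [_ [hx _]]].
have hdh : forall j, (1 <= j <= S)%N -> dh hs j <= hmax S hs.
  move=> j hj; rewrite /hmax.
  apply: (le_bigmax_seq 0 j (fun _ => true) (dh hs)) => //.
  by rewrite mem_index_iota ltnS.
have dh0 : forall j, (1 <= j <= S)%N -> 0 <= dh hs j.
  move=> j /andP [j1 jS]; rewrite /dh subr_ge0; apply: hmono => //; exact: leq_pred.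
have hmax0 : 0 <= hmax S hs.
  by apply: le_trans (dh0 1%N _) (hdh 1%N _); rewrite leqnn S0.
have sX0 : forall j, (0 <= \sum_(k < I) lam (X k.+1 j))%E.
  by move=> j; apply: sume_ge0 => k _; exact: measure_ge0.
apply: (le_trans (@lee_sum_nat' _ _ (fun j => (\sum_(k < I) lam (X k.+1 j)) * (dh hs j)%:E)%E _ _ _)).
  move=> j hj; apply: le_trans (step1 j _) _; first by rewrite ltnS in hj.
  apply: lee_wpmul2r; first by rewrite lee_fin dh0 // -ltnS.
  by rewrite /Xj; apply: (@subN _ (fun k => X k.+1 j) I) => k kI; apply: mX; rewrite kI.
apply: (le_trans (@lee_sum_nat' _ _ (fun j => (\sum_(k < I) lam (X k.+1 j)) * (hmax S hs)%:E)%E _ _ _)).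
  move=> j hj; apply: lee_wpmul2l => //.
  by rewrite lee_fin hdh // -ltnS.
rewrite -ge0_sume_distrl; last by move=> j _; exact: sX0.
rewrite exchange_big /=.
apply: (@le_trans _ _ ((\sum_(k < I) (Lx + Lx)%:E) * (hmax S hs)%:E)%E).
  apply: lee_wpmul2r; first by rewrite lee_fin.
  by apply: lee_sum => k _; apply: step3; rewrite ltn_ord.
rewrite sumEFin sumr_const card_ord -EFinM lee_fin.
rewrite le_eqVlt; apply/orP; left; apply/eqP.
rewrite -mulr_natr; ring.
Qed.
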